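(* Let $\mathcal X,\mathcal Y$ be finite sets, $\mathcal A$ an action set, $L:\mathcal Y\times\mathcal A\to\mathbb R$ a loss function, $d\ge0$ an integer and $f:\mathcal X\to\mathcal Y$ a function. Let $\{X_t\}$ be a process with values in $\mathcal X$ and $Y_t=f(X_{t-d})$. If $X_t\leftrightarrow X_{t-\mu}\leftrightarrow X_{t-\mu-\nu}$ is a Markov chain for all integers $\mu,\nu\ge0$, then $H_L(Y_t\mid X_{t-\delta})$ is (weakly) decreasing in $\delta$ for $0\le\delta<d$ and (weakly) increasing in $\delta$ for $\delta\ge d$. In addition, for any random variable $Z$ with values in $\mathcal X$, $$H_L(Y_t\mid X_{t-d})=H_L(Y_t\mid Y_t)\le H_L(Y_t\mid Z).$$
   Context: $H_L(Y\mid X)=\sum_xP_X(x)\min_{a\in\mathcal A}\mathbb E_{Y\sim P_{Y\mid X=x}}[L(Y,a)]$ is the $L$-conditional entropy (minima assumed attained). *)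

(* Defs.v *)
From HB Require Import structures.
From mathcomp Require Import all_boot all_order all_algebra.
From mathcomp Require Import all_classical all_reals all_analysis.
Set Implicit Arguments. Unset Strict Implicit. Unset Printing Implicit Defensive.
Import Order.TTheory GRing.Theory Num.Theory.
Local Open Scope classical_set_scope.
Local Open Scope ring_scope.

Definition prb (R : realType) (dm : measure_display) (T : measurableType dm)
  (P : probability T R) (E : set T) : R := fine (P E).

Definition margp (R : realType) (dm : measure_display) (T : measurableType dm)
  (P : probability T R) (U : Type) (X : T -> U) (x : U) : R :=
  prb P [set w | X w = x].

Definition jointp (R : realType) (dm : measure_display) (T : measurableType dm)
  (P : probability T R) (U V : Type) (X : T -> U) (Y : T -> V) (x : U) (y : V) : R :=
  prb P [set w | X w = x /\ Y w = y].

(* conditional pmf P(Y = y | X = x) = P(X = x, Y = y) / P(X = x)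
   (equal to 0 when P(X = x) = 0, by the convention x / 0 = 0) *)
Definition condp (R : realType) (dm : measure_display) (T : measurableType dm)
  (P : probability T R) (U V : Type) (Y : T -> V) (X : T -> U) (y : V) (x : U) : R :=
  jointp P X Y x y / margp P X x.

Definition expected_loss (R : realType) (Ys : finType) (A : Type)
  (L : Ys -> A -> R) (q : Ys -> R) (a : A) : R :=
  \sum_(y : Ys) q y * L y a.

(* min_{a in A} E_{Y ~ q}[L(Y,a)]  (the infimum, which is a minimum under
   the attainment assumption [minima_attained]) *)
Definition minloss (R : realType) (Ys : finType) (A : Type)
  (L : Ys -> A -> R) (q : Ys -> R) : R :=
  inf (range (expected_loss L q)).

Definition minima_attained (R : realType) (Ys : finType) (A : Type)
  (L : Ys -> A -> R) : Prop :=
  forall q : Ys -> R, (forall y, 0 <= q y) -> \sum_(y : Ys) q y = 1 ->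
    exists a0 : A, forall a : A, expected_loss L q a0 <= expected_loss L q a.

Definition HL (R : realType) (dm : measure_display) (T : measurableType dm)
  (P : probability T R) (Ys : finType) (A : Type) (L : Ys -> A -> R)
  (U : finType) (Y : T -> Ys) (X : T -> U) : R :=
  \sum_(x : U) margp P X x * minloss L (fun y => condp P Y X y x).

Definition discrete_rv (dm : measure_display) (T : measurableType dm)
  (U : Type) (X : T -> U) : Prop :=
  forall x : U, measurable [set w | X w = x].

Definition markov_chain (R : realType) (dm : measure_display) (T : measurableType dm)
  (P : probability T R) (U : finType) (XA XB XC : T -> U) : Prop :=
  forall a b c : U, 0 < margp P XB b ->
    prb P [set w | XA w = a /\ XC w = c /\ XB w = b] / margp P XB b
    = condp P XA XB a b * condp P XC XB c b.

(* Main.v *)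
Require Import Defs.
From HB Require Import structures.
From mathcomp Require Import all_boot all_order all_algebra.
From mathcomp Require Import all_classical all_reals all_analysis.
From mathcomp Require Import ring zify.
Set Implicit Arguments. Unset Strict Implicit. Unset Printing Implicit Defensive.
Import Order.TTheory GRing.Theory Num.Theory.
Local Open Scope classical_set_scope.
Local Open Scope ring_scope.


Section Basic.
Context (R : realType) (dm : measure_display) (T : measurableType dm)
  (P : probability T R).

Lemma prbE (E : set T) : measurable E -> P E = (prb P E)%:E.
Proof. move=> mE; rewrite /prb fineK //; exact: fin_num_measure. Qed.

Lemma prb_ge0 (E : set T) : 0 <= prb P E.
Proof. by rewrite /prb fine_ge0. Qed.

Lemma prb_ext (Q1 Q2 : T -> Prop) : (forall w, Q1 w <-> Q2 w) ->
  prb P [set w | Q1 w] = prb P [set w | Q2 w].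
Proof.
move=> H; congr prb; apply/funext => w /=; apply/propext; exact: H.
Qed.

Lemma prb_set0 (Q : T -> Prop) : (forall w, ~ Q w) -> prb P [set w | Q w] = 0.
Proof.
move=> H; rewrite (_ : [set w | Q w] = set0) ?/prb ?measure0 //.
by apply/funext => w /=; apply/propext; split => // /H.
Qed.

Lemma prbU (A B : set T) : measurable A -> measurable B -> A `&` B = set0 ->
  prb P (A `|` B) = prb P A + prb P B.
Proof.
move=> mA mB AB; rewrite /prb measureU // fineD //; exact: fin_num_measure.
Qed.

Lemma prb_le (A B : set T) : measurable A -> measurable B -> A `<=` B ->
  prb P A <= prb P B.
Proof.
move=> mA mB AB; rewrite -lee_fin -!prbE //; apply: le_measure => //; by rewrite inE.
Qed.

Lemma meas_pred (U : finType) (V : T -> U) (p : U -> Prop) :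
  discrete_rv V -> measurable [set w | p (V w)].
Proof.
move=> dV.
have -> : [set w | p (V w)] = \bigcup_(u in [set u | p u]) [set w | V w = u].
  apply/funext => w /=; apply/propext; split.
  - by move=> pw; exists (V w).
  - by case=> u /= pu ->.
apply: fin_bigcup_measurable => // u _; exact: dV.
Qed.

Lemma prb_sum_seq (U : finType) (V : T -> U) (Q : T -> Prop) (s : seq U) :
  discrete_rv V -> measurable [set w | Q w] -> uniq s ->
  prb P [set w | Q w /\ V w \in s] = \sum_(u <- s) prb P [set w | Q w /\ V w = u].
Proof.
move=> dV mQ; elim: s => [|x s IH] /=.
  by move=> _; rewrite big_nil prb_set0 // => w [].
move=> /andP [xs us]; rewrite big_cons -IH //.
rewrite (_ : [set w | Q w /\ V w \in x :: s] =
   [set w | Q w /\ V w = x] `|` [set w | Q w /\ V w \in s]).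
  apply: prbU.
  - apply: measurableI => //; exact: dV.
  - apply: measurableI => //; exact: (@meas_pred _ V (fun u => is_true (u \in s)) dV).
  - apply/funext => w /=; apply/propext; split => //.
    by move=> [[_ ->] [_ /negP]]; rewrite (negbTE xs).
apply/funext => w /=; apply/propext; rewrite in_cons; split.
- by move=> [qw /orP [/eqP ->|ws]]; [left|right].
- by case=> -[qw]; [move=> ->; rewrite eqxx | move=> ->; rewrite orbT].
Qed.

Lemma prb_sum (U : finType) (V : T -> U) (Q : T -> Prop) :
  discrete_rv V -> measurable [set w | Q w] ->
  prb P [set w | Q w] = \sum_(u : U) prb P [set w | Q w /\ V w = u].
Proof.
move=> dV mQ; rewrite -big_enum /= -prb_sum_seq ?enum_uniq //.
by apply: prb_ext => w; rewrite mem_enum; split => // -[].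
Qed.

Lemma prb_sum' (U : finType) (V : T -> U) (Q : T -> Prop) :
  discrete_rv V -> measurable [set w | Q w] ->
  prb P [set w | Q w] = \sum_(u : U) prb P [set w | V w = u /\ Q w].
Proof.
move=> dV mQ; rewrite (prb_sum dV mQ); apply: eq_bigr => u _.
by apply: prb_ext => w; tauto.
Qed.

End Basic.


Section L2.
Context (R : realType) (dm : measure_display) (T : measurableType dm)
  (P : probability T R).

Lemma marg_joint (U V : finType) (Z : T -> U) (B : T -> V) b :
  discrete_rv Z -> discrete_rv B ->
  margp P B b = \sum_z jointp P Z B z b.
Proof. by move=> dZ dB; rewrite /margp (prb_sum' P dZ (dB b)). Qed.

Lemma marg_joint2 (U V : finType) (Z : T -> U) (Y : T -> V) z :
  discrete_rv Z -> discrete_rv Y ->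
  margp P Z z = \sum_y jointp P Z Y z y.
Proof. by move=> dZ dY; rewrite /margp (prb_sum P dY (dZ z)). Qed.

Lemma jointp_ge0 (U V : Type) (Z : T -> U) (Y : T -> V) z y : 0 <= jointp P Z Y z y.
Proof. exact: prb_ge0. Qed.

Lemma margp_ge0 (U : Type) (Z : T -> U) z : 0 <= margp P Z z.
Proof. exact: prb_ge0. Qed.

Lemma le_sum_term (I : finType) (F : I -> R) i : (forall j, 0 <= F j) ->
  F i <= \sum_j F j.
Proof.
move=> F0; rewrite (bigD1 i) //= lerDl; apply: sumr_ge0 => j _; exact: F0.
Qed.

Lemma joint_le_marg2 (U V : finType) (Z : T -> U) (B : T -> V) z b :
  discrete_rv Z -> discrete_rv B -> jointp P Z B z b <= margp P B b.
Proof.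
move=> dZ dB; rewrite (marg_joint b dZ dB).
set F := (fun z0 => jointp P Z B z0 b); have -> : jointp P Z B z b = F z by []. 
apply: le_sum_term => j; exact: jointp_ge0.
Qed.

Lemma joint_le_marg1 (U V : finType) (Z : T -> U) (B : T -> V) z b :
  discrete_rv Z -> discrete_rv B -> jointp P Z B z b <= margp P Z z.
Proof.
move=> dZ dB; rewrite (marg_joint2 z dZ dB).
set F := (fun b0 => jointp P Z B z b0); have -> : jointp P Z B z b = F b by []. 
apply: le_sum_term => j; exact: jointp_ge0.
Qed.

Lemma jointC (U V : Type) (Z : T -> U) (B : T -> V) z b :
  jointp P Z B z b = jointp P B Z b z.
Proof. by apply: prb_ext => w; tauto. Qed.

Lemma mul_condp (U V : finType) (W : T -> U) (B : T -> V) w b :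
  discrete_rv W -> discrete_rv B ->
  margp P B b * condp P W B w b = jointp P B W b w.
Proof.
move=> dW dB; rewrite /condp.
have [m0|mn0] := eqVneq (margp P B b) 0.
  have j0 : jointp P B W b w = 0.
    apply/eqP; rewrite eq_le jointp_ge0 andbT -m0; exact: joint_le_marg1.
  by rewrite m0 j0 mul0r.
by rewrite mulrC divfK.
Qed.

Lemma joint_cancel (U V : finType) (W : T -> U) (B : T -> V) w b :
  discrete_rv W -> discrete_rv B ->
  jointp P W B w b * (margp P B b / margp P B b) = jointp P W B w b.
Proof.
move=> dW dB.
have [m0|mn0] := eqVneq (margp P B b) 0.
  have j0 : jointp P W B w b = 0.
    apply/eqP; rewrite eq_le jointp_ge0 andbT -m0; exact: joint_le_marg2.
  by rewrite j0 mul0r.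
by rewrite divff // mulr1.
Qed.

Lemma condp_ge0 (U V : Type) (W : T -> U) (B : T -> V) w b : 0 <= condp P W B w b.
Proof. by rewrite /condp divr_ge0 // ?jointp_ge0 ?margp_ge0. Qed.

Lemma condp_sum1 (U V : finType) (W : T -> U) (B : T -> V) b :
  discrete_rv W -> discrete_rv B -> 0 < margp P B b ->
  \sum_w condp P W B w b = 1.
Proof.
move=> dW dB m0; rewrite /condp -mulr_suml -(marg_joint2 b dB dW).
by rewrite divff // gt_eqF.
Qed.

Lemma joint_fun (U V W : finType) (Z : T -> U) (B : T -> V) (Y : T -> W)
  (g : V -> W) z y :
  discrete_rv Z -> discrete_rv B -> (forall w, Y w = g (B w)) ->
  \sum_u (g u == y)%:R * jointp P Z B z u = jointp P Z Y z y.
Proof.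
move=> dZ dB hY.
have mY : measurable [set w | Y w = y].
  rewrite (_ : [set w | Y w = y] = [set w | g (B w) = y]).
    exact: (@meas_pred _ _ _ B (fun v => g v = y) dB).
  by apply/funext => w /=; rewrite hY.
rewrite {2}/jointp (prb_sum P (Q := fun w => Z w = z /\ Y w = y) dB); last first.
  by apply: measurableI; [exact: dZ | exact: mY].
apply: eq_bigr => u _; rewrite /jointp.
have [gu|gu] := eqVneq (g u) y.
  rewrite mul1r; apply: prb_ext => w; rewrite hY; split.
    by move=> [zw bw]; rewrite bw.
  by move=> [[zw _] bw].
rewrite mul0r prb_set0 // => w [[_]]; rewrite hY => gb bw.
by move: gu; rewrite -bw gb eqxx.
Qed.

Lemma minloss_eq (Ys : finType) (A : Type) (L : Ys -> A -> R) q a0 :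
  (forall a, expected_loss L q a0 <= expected_loss L q a) ->
  minloss L q = expected_loss L q a0.
Proof.
move=> H; rewrite /minloss; apply/eqP; rewrite eq_le; apply/andP; split.
  apply: ge_inf; last by exists a0.
  by exists (expected_loss L q a0) => _ [a _ <-].
apply: lb_le_inf; first by exists (expected_loss L q a0); exists a0.
by move=> _ [a _ <-].
Qed.

Lemma minloss_le (Ys : finType) (A : Type) (L : Ys -> A -> R) q a :
  minima_attained L -> (forall y, 0 <= q y) -> \sum_y q y = 1 ->
  minloss L q <= expected_loss L q a.
Proof.
move=> ma q0 q1; have [a0 Ha0] := ma q q0 q1.
by rewrite (minloss_eq Ha0).
Qed.

End L2.


Section L3.
Context (R : realType) (dm : measure_display) (T : measurableType dm)
  (P : probability T R).

Lemma dp (Ys U V : finType) (A : Type) (L : Ys -> A -> R) (Y : T -> Ys)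
  (B : T -> U) (Z : T -> V) :
  discrete_rv Y -> discrete_rv B -> discrete_rv Z -> minima_attained L ->
  (forall z y, jointp P Z Y z y = \sum_b jointp P Z B z b * condp P Y B y b) ->
  HL P L Y B <= HL P L Y Z.
Proof.
move=> dY dB dZ ma H; rewrite /HL.
under eq_bigr => b _ do rewrite (marg_joint P b dZ dB) mulr_suml.
rewrite exchange_big /=; apply: ler_sum => z _.
have [m0|mpos] : margp P Z z = 0 \/ 0 < margp P Z z.
  by move: (margp_ge0 P Z z); rewrite le0r => /orP [/eqP|]; [left|right].
  rewrite m0 mul0r big1 // => b _.
  have -> : jointp P Z B z b = 0.
    by apply/eqP; rewrite eq_le jointp_ge0 andbT -m0; exact: joint_le_marg1.
  by rewrite mul0r.
have q0 : forall y, 0 <= condp P Y Z y z by move=> y; exact: condp_ge0.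
have q1 := condp_sum1 dY dZ mpos.
have [a0 Ha0] := ma _ q0 q1.
rewrite (minloss_eq Ha0) /expected_loss mulr_sumr.
under [X in _ <= X]eq_bigr => y _ do
  rewrite mulrA (mul_condp P _ _ dY dZ) H mulr_suml.
rewrite [X in _ <= X]exchange_big /=; apply: ler_sum => b _.
under [X in _ <= X]eq_bigr => y _ do rewrite -mulrA.
rewrite -mulr_sumr.
have [j0|jpos] : jointp P Z B z b = 0 \/ 0 < jointp P Z B z b.
  by move: (jointp_ge0 P Z B z b); rewrite le0r => /orP [/eqP|]; [left|right].
  by rewrite j0 !mul0r.
rewrite ler_wpM2l ?jointp_ge0 //.
have mb : 0 < margp P B b by apply: (lt_le_trans jpos); exact: joint_le_marg2.
apply: minloss_le => //; first by move=> y; exact: condp_ge0.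
exact: condp_sum1.
Qed.

End L3.


Section L4.
Context (R : realType) (dm : measure_display) (T : measurableType dm)
  (P : probability T R).

Lemma discr_fun (U V : finType) (B : T -> U) (Y : T -> V) (g : U -> V) :
  discrete_rv B -> (forall w, Y w = g (B w)) -> discrete_rv Y.
Proof.
move=> dB hY y; rewrite (_ : [set w | Y w = y] = [set w | g (B w) = y]).
  exact: (@meas_pred _ _ _ B (fun v => g v = y) dB).
by apply/funext => w /=; rewrite hY.
Qed.

Lemma split_fun (U V : finType) (Q : T -> Prop) (D : T -> U) (Y : T -> V)
  (g : U -> V) y :
  measurable [set w | Q w] -> discrete_rv D -> (forall w, Y w = g (D w)) ->
  prb P [set w | Q w /\ Y w = y] =
  \sum_u (g u == y)%:R * prb P [set w | Q w /\ D w = u].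
Proof.
move=> mQ dD hY.
have dY := discr_fun dD hY.
rewrite (prb_sum P (Q := fun w => Q w /\ Y w = y) dD); last first.
  by apply: measurableI => //; exact: dY.
apply: eq_bigr => u _.
have [gu|gu] := eqVneq (g u) y.
  rewrite mul1r; apply: prb_ext => w; rewrite hY; split.
    by move=> [[qw _] bw].
  by move=> [qw bw]; rewrite bw gu.
rewrite mul0r prb_set0 // => w [[_]]; rewrite hY => gb bw.
by move: gu; rewrite -bw gb eqxx.
Qed.

Lemma G_lemma (Ys U V : finType) (A : Type) (L : Ys -> A -> R) (Y : T -> Ys)
  (B : T -> U) (Z : T -> V) (g : U -> Ys) :
  discrete_rv B -> discrete_rv Z -> minima_attained L ->
  (forall w, Y w = g (B w)) ->
  HL P L Y B <= HL P L Y Z.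
Proof.
move=> dB dZ ma hY; have dY := discr_fun dB hY.
apply: dp => // z y.
rewrite /jointp (split_fun (Q := fun w => Z w = z) y (dZ z) dB hY).
apply: eq_bigr => b _; rewrite /condp.
have -> : jointp P B Y b y = (g b == y)%:R * margp P B b.
  have [gu|gu] := eqVneq (g b) y.
    by rewrite mul1r; apply: prb_ext => w; rewrite hY; split => [[]|->].
  rewrite mul0r; apply: prb_set0 => w [bw]; rewrite hY bw => gb.
  by move: gu; rewrite gb eqxx.
by rewrite -mulrA mulrCA (joint_cancel P _ _ dZ dB).
Qed.

Lemma markov_prb (Xs : finType) (A B C : T -> Xs) a b c :
  discrete_rv A -> discrete_rv B -> discrete_rv C -> markov_chain P A B C ->
  prb P [set w | A w = a /\ C w = c /\ B w = b]
  = margp P B b * condp P A B a b * condp P C B c b.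
Proof.
move=> dA dB dC mc.
have [m0|mpos] : margp P B b = 0 \/ 0 < margp P B b.
  by move: (margp_ge0 P B b); rewrite le0r => /orP [/eqP|]; [left|right].
  rewrite m0 !mul0r; apply/eqP; rewrite eq_le prb_ge0 andbT -m0.
  apply: prb_le.
  - apply: measurableI; first exact: dA.
    by apply: measurableI; [exact: dC | exact: dB].
  - exact: dB.
  - by move=> w /= [_ [_ bw]].
have := mc a b c mpos => /(congr1 (fun x => margp P B b * x)).
by rewrite mulrCA divff ?gt_eqF // mulr1 mulrA.
Qed.

Lemma case1 (Xs Ys : finType) (A B C : T -> Xs) (Y : T -> Ys) (f : Xs -> Ys) :
  discrete_rv A -> discrete_rv B -> discrete_rv C -> markov_chain P A B C ->
  (forall w, Y w = f (C w)) ->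
  forall a y, jointp P A Y a y = \sum_b jointp P A B a b * condp P Y B y b.
Proof.
move=> dA dB dC mc hY a y.
have dY := discr_fun dC hY.
rewrite /jointp (prb_sum P (Q := fun w => A w = a /\ Y w = y) dB); last first.
  by apply: measurableI; [exact: dA | exact: dY].
apply: eq_bigr => b _.
rewrite (prb_ext P (Q2 := fun w => (A w = a /\ B w = b) /\ Y w = y)); last first.
  by move=> w; tauto.
rewrite (split_fun (Q := fun w => A w = a /\ B w = b) y _ dC hY); last first.
  by apply: measurableI; [exact: dA | exact: dB].
rewrite /condp -(joint_fun P b y dB dC hY) mulr_suml mulr_sumr.
apply: eq_bigr => c _.
rewrite (prb_ext P (Q2 := fun w => A w = a /\ C w = c /\ B w = b)); last first.
  by move=> w; tauto.
rewrite (markov_prb a b c dA dB dC mc).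
rewrite -/(jointp P A B a b) (jointC P A B) -(mul_condp P _ _ dA dB).
by rewrite mulrCA -!mulrA; congr (_ * _); rewrite mulrCA mulrA.
Qed.

Lemma case2 (Xs Ys : finType) (A B C : T -> Xs) (Y : T -> Ys) (f : Xs -> Ys) :
  discrete_rv A -> discrete_rv B -> discrete_rv C -> markov_chain P A B C ->
  (forall w, Y w = f (A w)) ->
  forall c y, jointp P C Y c y = \sum_b jointp P C B c b * condp P Y B y b.
Proof.
move=> dA dB dC mc hY c y.
have dY := discr_fun dA hY.
rewrite /jointp (prb_sum P (Q := fun w => C w = c /\ Y w = y) dB); last first.
  by apply: measurableI; [exact: dC | exact: dY].
apply: eq_bigr => b _.
rewrite (prb_ext P (Q2 := fun w => (C w = c /\ B w = b) /\ Y w = y)); last first.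
  by move=> w; tauto.
rewrite (split_fun (Q := fun w => C w = c /\ B w = b) y _ dA hY); last first.
  by apply: measurableI; [exact: dC | exact: dB].
rewrite /condp -(joint_fun P b y dB dA hY) mulr_suml mulr_sumr.
apply: eq_bigr => a _.
rewrite (prb_ext P (Q2 := fun w => A w = a /\ C w = c /\ B w = b)); last first.
  by move=> w; tauto.
rewrite (markov_prb a b c dA dB dC mc).
rewrite -/(jointp P C B c b) (jointC P C B) -(mul_condp P _ _ dC dB).
rewrite (_ : (f a == y)%:R * jointp P B A b a / margp P B b
   = (f a == y)%:R * condp P A B a b); last by rewrite /condp mulrA.
move: (condp P A B a b) (condp P C B c b) (margp P B b) ((f a == y)%:R : R).
by move=> x1 x2 x3 x4; ring.
Qed.


End L4.


Unset Implicit Arguments.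
Set Strict Implicit.

Theorem lemma4 (R : realType) (dm : measure_display) (T : measurableType dm)
  (P : probability T R) (Xs Ys : finType) (A : Type) (L : Ys -> A -> R)
  (d : nat) (f : Xs -> Ys) (X : int -> T -> Xs) :
  (forall t : int, discrete_rv (X t)) ->
  minima_attained L ->
  (forall (t : int) (mu nu : nat),
      markov_chain P (X t) (X (t - mu%:Z)) (X (t - mu%:Z - nu%:Z))) ->
  forall t : int,
    (forall delta1 delta2 : nat, (delta1 <= delta2 < d)%N ->
       HL P L (fun w => f (X (t - d%:Z) w)) (X (t - delta2%:Z))
       <= HL P L (fun w => f (X (t - d%:Z) w)) (X (t - delta1%:Z))) /\
    (forall delta1 delta2 : nat, (d <= delta1 <= delta2)%N ->
       HL P L (fun w => f (X (t - d%:Z) w)) (X (t - delta1%:Z))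
       <= HL P L (fun w => f (X (t - d%:Z) w)) (X (t - delta2%:Z))) /\
    HL P L (fun w => f (X (t - d%:Z) w)) (X (t - d%:Z))
      = HL P L (fun w => f (X (t - d%:Z) w)) (fun w => f (X (t - d%:Z) w)) /\
    (forall Z : T -> Xs, discrete_rv Z ->
       HL P L (fun w => f (X (t - d%:Z) w)) (X (t - d%:Z))
       <= HL P L (fun w => f (X (t - d%:Z) w)) Z).
Proof.
move=> dX ma hM t.
set Y := fun w => f (X (t - d%:Z) w).
have hY : forall w, Y w = f (X (t - d%:Z) w) by [].
have dY : discrete_rv Y := discr_fun (dX _) hY.
split; last split; last split.
- move=> d1 d2 /andP [h12 h2d].
  have := hM (t - d1%:Z) (d2 - d1)%N (d - d2)%N.
  have -> : t - d1%:Z - (d2 - d1)%N%:Z = t - d2%:Z by lia.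
  have -> : t - d2%:Z - (d - d2)%N%:Z = t - d%:Z by lia.
  move=> mc.
  apply: dp; [exact: dY | exact: dX | exact: dX | exact: ma | ].
  exact: (case1 (dX _) (dX _) (dX _) mc hY).
- move=> d1 d2 /andP [hd1 h12].
  have := hM (t - d%:Z) (d1 - d)%N (d2 - d1)%N.
  have -> : t - d%:Z - (d1 - d)%N%:Z = t - d1%:Z by lia.
  have -> : t - d1%:Z - (d2 - d1)%N%:Z = t - d2%:Z by lia.
  move=> mc.
  apply: dp; [exact: dY | exact: dX | exact: dX | exact: ma | ].
  exact: (case2 (dX _) (dX _) (dX _) mc hY).
- apply/eqP; rewrite eq_le; apply/andP; split.
    exact: (G_lemma P (dX _) dY ma hY).
  exact: (G_lemma P (g := id) dY (dX _) ma).
- move=> Z dZ; exact: (G_lemma P (dX _) dZ ma hY).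
Qed.
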